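(* Let $X$ be a connected, finite, simple $4$-valent graph equipped with an orientation at each vertex. Then for every integer $k\geq2$, the Laplacian of $\mathrm{GC}_{2k,0}(X)$ has eigenvalue $4$ with multiplicity at least $\lceil (k-1)/2\rceil$.
   Context: The Laplacian of a graph $Y$ acts on $f\in\mathbb{C}^{V(Y)}$ by $(\Delta_Y f)(p)=\deg(p)f(p)-\sum_{q\sim p}f(q)$. An orientation at each vertex is a cyclic ordering of the four edges at each vertex. Goldberg–Coxeter construction $\mathrm{GC}_{m,0}(X)$ for $m\geq1$: in the square lattice $\mathbb{Z}[i]\subset\mathbb{C}$ let $S$ be the square with vertices $0,m,(1+i)m,im$. For each $p\in V(X)$ take a copy $\overline{\square}(p)$ of the graph whose vertices are the barycenters of the $m^2$ unit squares in $S$, adjacent when the squares share an edge (an $m\times m$ grid); the four sides of $S$ are matched with the four edges at $p$ so that the cyclic order at $p$ agrees with the counterclockwise order of the sides. For each edge $e=pq$, place $\overline{\square}(p)$ on $S$ with $e$ corresponding to the side from $m$ to $(1+i)m$ and $\overline{\square}(q)$ (preserving orientation) on the adjacent square with vertices $m,2m,(2+i)m,(1+i)m$ with $e$ corresponding to the side from $(1+i)m$ to $m$, and identify all overlapping vertices and edges; the result is the $4$-valent graph $\mathrm{GC}_{m,0}(X)$. *)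

(* Defs.v *)
From HB Require Import structures.
From mathcomp Require Import all_boot all_order all_algebra all_field.
Set Implicit Arguments. Unset Strict Implicit. Unset Printing Implicit Defensive.
Import Order.TTheory GRing.Theory Num.Theory.

(* An orientation at each vertex (cyclic ordering of the 4 edges at p, which,
   the graph being simple, are in bijection with the neighbours of p) is
   represented by a labelling [nb p : 'I_4 -> V] listing the neighbours of p
   in that cyclic (counterclockwise) order. *)
Definition is_orientation (V : finType) (adj : rel V) (nb : V -> 'I_4 -> V) :=
  forall p, injective (nb p) /\ (forall q, adj p q = (q \in codom (nb p))).

(* The unit cells of the m x m square S = [0,m]^2 are indexed by (a,b),
   0 <= a,b < m (cell [a,a+1] x [b,b+1]).  Sides of S in counterclockwise
   order: 0 = bottom (0 -> m), 1 = right (m -> (1+i)m), 2 = top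
   ((1+i)m -> im), 3 = left (im -> 0).  [side_cell m s t] is the t-th cell
   (0 <= t < m) adjacent to side s, counted along the counterclockwise
   direction of that side. *)
Definition side_cell (m : nat) (s : 'I_4) (t : nat) : nat * nat :=
  match val s with
  | 0 => (t, 0)
  | 1 => (m.-1, t)
  | 2 => (m.-1 - t, m.-1)
  | _ => (0, m.-1 - t)
  end.

(* Vertex (p,a,b): cell (a,b) of the
   copy of the m x m grid attached to p.  Edge nb p s is matched with side s
   of p's square.  Adjacency: grid adjacency inside a square, and, for every
   edge e = pq (e = side s at p, side s' at q), gluing q's square along the
   side corresponding to e (with p's side of e as the right side from m to
   (1+i)m and q's side as the left side from (1+i)m to m of the neighbouring
   square): the t-th cell along side s of p becomes adjacent to the
   (m-1-t)-th cell along side s' of q. *)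
Definition GC_adj (V : finType) (nb : V -> 'I_4 -> V) (m : nat) :
    rel (V * 'I_m * 'I_m) :=
  fun x y =>
    let p := x.1.1 in let a : nat := x.1.2 in let b : nat := x.2 in
    let q := y.1.1 in let c : nat := y.1.2 in let d : nat := y.2 in
    (p == q) &&
      (((a == c) && ((b == d.+1) || (d == b.+1))) ||
       ((b == d) && ((a == c.+1) || (c == a.+1))))
    || [exists s : 'I_4, exists s' : 'I_4, exists t : 'I_m,
          [&& nb p s == q, nb q s' == p,
              side_cell m s t == (a, b) &
              side_cell m s' (m.-1 - t) == (c, d)]].

Definition deg (T : finType) (e : rel T) (x : T) : nat := #|[set y | e x y]|.

Local Open Scope ring_scope.
Definition laplacian_mx (T : finType) (e : rel T) : 'M[algC]_#|T| :=
  \matrix_(i, j) ((if i == j then (deg e (enum_val i))%:R else 0)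
                  - (e (enum_val i) (enum_val j))%:R).

Arguments GC_adj {V} nb m.

(* Main.v *)
Require Import Defs.
From HB Require Import structures.
From mathcomp Require Import all_boot all_order all_algebra all_field.
From mathcomp Require Import zify ring.
Import Order.TTheory GRing.Theory Num.Theory.


Definition d0 : 'I_4 := @Ordinal 4 0 isT.
Definition d1 : 'I_4 := @Ordinal 4 1 isT.
Definition d2 : 'I_4 := @Ordinal 4 2 isT.
Definition d3 : 'I_4 := @Ordinal 4 3 isT.

Definition opp {V : finType} (nb : V -> 'I_4 -> V) p s : 'I_4 :=
  odflt ord0 [pick s' | nb (nb p s) s' == p].

Lemma opp_spec {V : finType} {adj : rel V} nb p s :
  symmetric adj -> is_orientation adj nb -> nb (nb p s) (opp nb p s) = p.
Proof.
move=> sym ori; rewrite /opp; case: pickP => [s' /eqP //|H].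
have h1 : adj p (nb p s) by rewrite (proj2 (ori p)) codom_f.
rewrite sym (proj2 (ori _)) in h1.
case/codomP: h1 => s' hs'; move: (H s'); by rewrite -hs' eqxx.
Qed.

Lemma opp_eq {V : finType} {adj : rel V} nb p s s' :
  symmetric adj -> is_orientation adj nb -> nb (nb p s) s' = p -> opp nb p s = s'.
Proof.
move=> sym ori h; apply: (proj1 (ori (nb p s))); by rewrite h (opp_spec _ _ _ sym ori).
Qed.

Lemma nb_neq {V : finType} {adj : rel V} nb p s :
  irreflexive adj -> is_orientation adj nb -> nb p s != p.
Proof.
move=> irr ori; apply/eqP => h.
have : adj p (nb p s) by rewrite (proj2 (ori p)) codom_f.
by rewrite h irr.
Qed.

Lemma side_cell_lt n s t : (t <= n)%N ->
  ((side_cell n.+1 s t).1 <= n)%N && ((side_cell n.+1 s t).2 <= n)%N.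
Proof. case: s => [[|[|[|s]]] Hs] /= ht; lia. Qed.

Definition ext {V : finType} (nb : V -> 'I_4 -> V) n p s t : V * 'I_n.+1 * 'I_n.+1 :=
  (nb p s, inord (side_cell n.+1 (opp nb p s) (n - t)).1,
           inord (side_cell n.+1 (opp nb p s) (n - t)).2).

Definition Nbr {V : finType} (nb : V -> 'I_4 -> V) (n : nat) (x : V * 'I_n.+1 * 'I_n.+1)
    (i : 'I_4) : V * 'I_n.+1 * 'I_n.+1 :=
  let p := x.1.1 in let a : nat := x.1.2 in let b : nat := x.2 in
  match val i with
  | 0 => if (0 < b)%N then (p, x.1.2, inord b.-1) else ext nb n p i a
  | 1 => if (a < n)%N then (p, inord a.+1, x.2) else ext nb n p i b
  | 2 => if (b < n)%N then (p, x.1.2, inord b.+1) else ext nb n p i (n - a)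
  | _ => if (0 < a)%N then (p, inord a.-1, x.2) else ext nb n p i (n - b)
  end.

Lemma adj_Nbr {V : finType} {adj : rel V} nb n x y :
  symmetric adj -> is_orientation adj nb ->
  GC_adj nb n.+1 x y -> exists i, y = Nbr nb n x i.
Proof.
move=> sym ori.
case: x => [[p a] b]; case: y => [[q c] d].
have Ha := ltn_ord a; have Hb := ltn_ord b; have Hc := ltn_ord c; have Hd := ltn_ord d.
rewrite /GC_adj /=; case/orP.
  case/andP => /eqP <-.
  case/orP => /andP [/eqP h /orP [/eqP h' | /eqP h']].
  - exists d0; rewrite /Nbr /=; case: ifP => h2; last lia.
    congr (_, _, _); apply/val_inj => /=; rewrite ?inordK; try lia.
  - exists d2; rewrite /Nbr /=; case: ifP => h2; last lia.
    congr (_, _, _); apply/val_inj => /=; rewrite ?inordK; lia.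
  - exists d3; rewrite /Nbr /=; case: ifP => h2; last lia.
    congr (_, _, _); apply/val_inj => /=; rewrite ?inordK; lia.
  - exists d1; rewrite /Nbr /=; case: ifP => h2; last lia.
    congr (_, _, _); apply/val_inj => /=; rewrite ?inordK; lia.
case/existsP => s /existsP [s' /existsP [t /and4P [/eqP hq /eqP hp /eqP hs /eqP hs']]].
subst q.
have ho := opp_eq _ _ _ _ sym ori hp; subst s'; clear hp.
exists s.
have Ht := ltn_ord t.
move: hs hs'; rewrite /Nbr /ext.
case: s => [[|[|[|[|s]]]] Hs] //= [ha hb] hs'.
- case: ifP => h2; first lia.
  rewrite -ha hs' /=; congr (_, _, _); by rewrite inord_val.
- case: ifP => h2; first lia.
  rewrite -hb hs' /=; congr (_, _, _); by rewrite inord_val.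
- case: ifP => h2; first lia.
  have -> : (n - (n - a) = n - t)%N by lia.
  rewrite hs' /=; congr (_, _, _); by rewrite inord_val.
- case: ifP => h2; first lia.
  have -> : (n - (n - b) = n - t)%N by lia.
  rewrite hs' /=; congr (_, _, _); by rewrite inord_val.
Qed.

Lemma ext_val {V : finType} (nb : V -> 'I_4 -> V) n p s u : (u <= n)%N ->
  ((ext nb n p s u).1.2 : nat, (ext nb n p s u).2 : nat)
   = side_cell n.+1 (opp nb p s) (n - u).
Proof.
move=> hu; rewrite /ext /=.
have /andP [h1 h2] := @side_cell_lt n (opp nb p s) (n - u) (leq_subr u n).
by rewrite !inordK //; case: (side_cell _ _ _).
Qed.

Lemma GC_ext {V : finType} {adj : rel V} nb n (x : V * 'I_n.+1 * 'I_n.+1) s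
    (t : 'I_n.+1) u :
  symmetric adj -> is_orientation adj nb -> val t = u ->
  side_cell n.+1 s t = (val x.1.2, val x.2) ->
  GC_adj nb n.+1 x (ext nb n x.1.1 s u).
Proof.
case: x => [[p a] b] /=.
move=> sym ori htu hs.
have E1 : (ext nb n p s u).1.1 = nb p s by [].
have Hu : (u <= n)%N by rewrite -htu -ltnS.
move: E1 (ext_val nb n p s u Hu).
case: (ext nb n p s u) => [[q c] d] /= -> E.
apply/orP; right; apply/existsP; exists s.
apply/existsP; exists (opp nb p s); apply/existsP; exists t.
rewrite (opp_spec _ _ _ sym ori) !eqxx hs eqxx htu /= E; by [].
Qed.

Lemma Nbr_adj {V : finType} {adj : rel V} nb n x i :
  symmetric adj -> is_orientation adj nb ->
  GC_adj nb n.+1 x (Nbr nb n x i).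
Proof.
move=> sym ori.
case: x => [[p a] b].
have Ha := ltn_ord a; have Hb := ltn_ord b.
case: i => [[|[|[|[|i]]]] Hi] //; rewrite /Nbr /=.
- case: ifP => h.
    apply/orP; left; rewrite eqxx /= inordK; lia.
  apply: (GC_ext _ _ (p, a, b) (Ordinal Hi) a _ sym ori) => //=.
  congr (_, _); lia.
- case: ifP => h.
    apply/orP; left; rewrite eqxx /= inordK; lia.
  apply: (GC_ext _ _ (p, a, b) (Ordinal Hi) b _ sym ori) => //=.
  congr (_, _); lia.
- case: ifP => h.
    apply/orP; left; rewrite eqxx /= inordK; lia.
  apply: (GC_ext _ _ (p, a, b) (Ordinal Hi) (rev_ord a) _ sym ori) => /=.
    by rewrite subSS.
  congr (_, _); lia.
- case: ifP => h.
    apply/orP; left; rewrite eqxx /= inordK; lia.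
  apply: (GC_ext _ _ (p, a, b) (Ordinal Hi) (rev_ord b) _ sym ori) => /=.
    by rewrite subSS.
  congr (_, _); lia.
Qed.

Lemma GC_adj_sym1 {V : finType} (nb : V -> 'I_4 -> V) n x y :
  GC_adj nb n.+1 x y -> GC_adj nb n.+1 y x.
Proof.
case: x => [[p a] b]; case: y => [[q c] d].
have Ha := ltn_ord a; have Hb := ltn_ord b; have Hc := ltn_ord c; have Hd := ltn_ord d.
rewrite /GC_adj /=; case/orP.
  case/andP => /eqP <- h; apply/orP; left; rewrite eqxx /=; lia.
case/existsP => s /existsP [s' /existsP [t /and4P [hq hp /eqP hs /eqP hs']]].
apply/orP; right; apply/existsP; exists s'; apply/existsP; exists s.
apply/existsP; exists (rev_ord t).
have Ht := ltn_ord t.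
rewrite hq hp /= subSS hs'.
have -> : (n - (n - t) = t)%N by lia.
by rewrite hs !eqxx.
Qed.

Lemma GC_adj_sym {V : finType} (nb : V -> 'I_4 -> V) n :
  symmetric (GC_adj nb n.+1).
Proof. by move=> x y; apply/idP/idP; apply: GC_adj_sym1. Qed.

Lemma Nbr_inj {V : finType} {adj : rel V} nb n x :
  irreflexive adj -> is_orientation adj nb -> injective (Nbr nb n x).
Proof.
move=> irr ori.
have Hn := nb_neq _ _ _ irr ori.
have Hinj := fun p => proj1 (ori p).
case: x => [[p a] b].
have Ha := ltn_ord a; have Hb := ltn_ord b.
have Hn' : forall o, (nb p o == p) = false by move=> o; apply: negbTE.
case=> [[|[|[|[|i]]]] Hi] // [[|[|[|[|j]]]] Hj] //; try (by move=> _; apply: val_inj);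
  rewrite /Nbr /=;
  case: ifP => h1; case: ifP => h2 => E;
  have e0 := congr1 (fun y => y.1.1) E;
  have e1 := congr1 (fun y => val y.1.2) E;
  have e2 := congr1 (fun y => val y.2) E; simpl in e0, e1, e2;
  (try (by move: e0 => /esym /eqP; rewrite Hn'));
  (try (by move: e0 => /eqP; rewrite Hn'));
  (try (by move: e0 => /Hinj /(congr1 val)));
  rewrite ?inordK in e1 e2; lia.
Qed.
Open Scope ring_scope.

Definition sgn (z : int) : algC := (-1) ^ z.

Lemma sgnD x y : sgn (x + y) = sgn x * sgn y.
Proof. by rewrite /sgn exprzDr // unitrN1. Qed.

Lemma sgn1 : sgn 1 = -1.
Proof. by rewrite /sgn expr1z. Qed.

Lemma sgnN x : sgn (- x) = sgn x.
Proof. by rewrite /sgn -exprz_inv invrN1. Qed.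

Lemma sgnS x : sgn (x + 1) = - sgn x.
Proof. by rewrite sgnD sgn1 mulrN1. Qed.

Lemma sgnB1 x : sgn (x - 1) = - sgn x.
Proof. by rewrite sgnD sgnN sgn1 mulrN1. Qed.

Lemma sgn_even (m : nat) : ~~ odd m -> sgn m%:Z = 1.
Proof. by move=> hm; rewrite /sgn; change ((-1) ^+ m = 1 :> algC); rewrite -signr_odd (negbTE hm). Qed.

Definition dd (m j : nat) (z : int) : algC :=
  ((m%:Z %| z - j%:Z)%Z)%:R - ((m%:Z %| z + j%:Z)%Z)%:R.

Lemma ddN m j z : dd m j (- z) = - dd m j z.
Proof.
rewrite /dd.
have -> : - z - j%:Z = - (z + j%:Z) by ring.
have -> : - z + j%:Z = - (z - j%:Z) by ring.
rewrite !rpredN; ring.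
Qed.

Lemma ddP m j z : dd m j (z + m%:Z) = dd m j z.
Proof.
rewrite /dd (addrAC z) (addrAC z (m%:Z)).
by rewrite (rpredDr _ (dvdzz _)) (rpredDr _ (dvdzz _)).
Qed.

Definition FF (m j : nat) (a b : int) : algC :=
  sgn b * dd m j (a + b + 1) + sgn a * dd m j (a - b).

Lemma FF_harm m j a b :
  FF m j (a + 1) b + FF m j (a - 1) b + FF m j a (b + 1) + FF m j a (b - 1) = 0.
Proof.
rewrite /FF !sgnS !sgnB1.
have e1 : a + 1 + b + 1 = a + b + 1 + 1 by ring.
have e2 : a - 1 + b + 1 = a + b + 1 - 1 by ring.
have e3 : a + (b + 1) + 1 = a + b + 1 + 1 by ring.
have e4 : a + (b - 1) + 1 = a + b + 1 - 1 by ring.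
have e5 : a + 1 - b = a - b + 1 by ring.
have e6 : a - 1 - b = a - b - 1 by ring.
have e7 : a - (b + 1) = a - b - 1 by ring.
have e8 : a - (b - 1) = a - b + 1 by ring.
rewrite e1 e2 e3 e4 e5 e6 e7 e8; ring.
Qed.

Lemma FF_per1 m j a b : ~~ odd m -> FF m j (a + m%:Z) b = FF m j a b.
Proof.
move=> hm; rewrite /FF sgnD sgn_even // mulr1.
have -> : a + m%:Z + b + 1 = a + b + 1 + m%:Z by ring.
have -> : a + m%:Z - b = a - b + m%:Z by ring.
by rewrite !ddP.
Qed.

Lemma FF_per2 m j a b : ~~ odd m -> FF m j a (b + m%:Z) = FF m j a b.
Proof.
move=> hm; rewrite /FF sgnD sgn_even // mulr1.
have -> : a + (b + m%:Z) + 1 = a + b + 1 + m%:Z by ring.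
have -> : a - (b + m%:Z) = a - b + - m%:Z by ring.
by rewrite ddP -(ddP m j (a - b + - m%:Z)) addrNK.
Qed.

Lemma FF_rot m j a b : ~~ odd m -> FF m j (m%:Z - 1 - b) a = FF m j a b.
Proof.
move=> hm; rewrite /FF.
have -> : m%:Z - 1 - b + a + 1 = a - b + m%:Z by ring.
have -> : m%:Z - 1 - b - a = - (a + b + 1) + m%:Z by ring.
rewrite !ddP ddN !sgnD sgn_even // !sgnN sgn1. ring.
Qed.

Lemma FF_rot2 m j a b : ~~ odd m ->
  FF m j (m%:Z - 1 - a) (m%:Z - 1 - b) = FF m j a b.
Proof.
by move=> hm; rewrite FF_rot // FF_rot.
Qed.

Lemma FF_rot3 m j a b : ~~ odd m -> FF m j b (m%:Z - 1 - a) = FF m j a b.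
Proof.
move=> hm; rewrite -FF_rot //.
by have -> : m%:Z - 1 - (m%:Z - 1 - a) = a by ring.
Qed.

Lemma FF_side n j s u : ~~ odd n.+1 -> (u <= n)%N ->
  FF n.+1 j (side_cell n.+1 s u).1 (side_cell n.+1 s u).2 = FF n.+1 j u 0.
Proof.
move=> hm hu; case: s => [[|[|[|s]]] Hs] /=.
- by [].
- rewrite -(FF_rot _ j u 0 hm).
  by have -> : n.+1%:Z - 1 - 0 = n%:Z by lia.
- rewrite -(FF_rot2 _ j u 0 hm).
  have -> : n.+1%:Z - 1 - 0 = n%:Z by lia.
  by have -> : n.+1%:Z - 1 - u%:Z = (n - u)%N by lia.
- rewrite -(FF_rot3 _ j u 0 hm).
  by have -> : n.+1%:Z - 1 - u%:Z = (n - u)%N by lia.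
Qed.

Definition fv {V : finType} n j (x : V * 'I_n.+1 * 'I_n.+1) : algC :=
  FF n.+1 j (val x.1.2)%:Z (val x.2)%:Z.

Lemma fv_ext {V : finType} (nb : V -> 'I_4 -> V) n j p s u : ~~ odd n.+1 -> (u <= n)%N ->
  fv n j (ext nb n p s u) = FF n.+1 j (n - u)%N 0.
Proof.
move=> hm hu; rewrite /fv.
have := ext_val nb n p s u hu.
case: (ext nb n p s u) => [[q c] d] /= E.
by rewrite -(@FF_side n j (opp nb p s) (n - u) hm (leq_subr u n)) -E.
Qed.

Lemma FF_L0 m j a : ~~ odd m -> FF m j a (-1) = FF m j (m%:Z - 1 - a) 0.
Proof.
move=> hm; rewrite -(FF_rot2 _ j a (-1) hm).
have -> : m%:Z - 1 - (-1) = 0 + m%:Z by ring.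
by rewrite FF_per2.
Qed.

Lemma FF_L1 m j b : ~~ odd m -> FF m j m%:Z b = FF m j (m%:Z - 1 - b) 0.
Proof.
move=> hm; have := FF_rot _ j b (-1) hm.
have -> : m%:Z - 1 - (-1) = m%:Z by ring.
by move=> ->; rewrite FF_L0.
Qed.

Lemma FF_L2 m j a : ~~ odd m -> FF m j a m%:Z = FF m j a 0.
Proof. by move=> hm; rewrite -{1}(add0r m%:Z) FF_per2. Qed.

Lemma FF_L3 m j b : ~~ odd m -> FF m j (-1) b = FF m j b 0.
Proof.
move=> hm; have := FF_rot _ j b m%:Z hm.
have -> : m%:Z - 1 - m%:Z = -1 by ring.
by move=> ->; rewrite FF_L2.
Qed.

Lemma Nbr_sum {V : finType} nb n j (x : V * 'I_n.+1 * 'I_n.+1) : ~~ odd n.+1 ->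
  \sum_(i < 4) fv n j (Nbr nb n x i) = 0.
Proof.
move=> hm.
case: x => [[p a] b].
have Ha := ltn_ord a; have Hb := ltn_ord b.
rewrite !big_ord_recl big_ord0 addr0 /Nbr /=.
have T0 : fv n j (if (0 < b)%N then (p, a, inord b.-1) else ext nb n p ord0 a)
   = FF n.+1 j a (b%:Z - 1).
  case: ifP => h.
    rewrite /fv /= inordK; last lia.
    by congr (FF _ _ _ _); lia.
  rewrite fv_ext //; try by lia.
  have -> : b%:Z - 1 = -1 by lia.
  rewrite FF_L0 //; congr (FF _ _ _ _); lia.
have T1 : fv n j (if (a < n)%N then (p, inord a.+1, b) else ext nb n p (lift ord0 ord0) b)
   = FF n.+1 j (a%:Z + 1) b.
  case: ifP => h.
    rewrite /fv /= inordK; last lia.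
    by congr (FF _ _ _ _); lia.
  rewrite fv_ext //; try by lia.
  have -> : a%:Z + 1 = n.+1%:Z by lia.
  rewrite FF_L1 //; congr (FF _ _ _ _); lia.
have T2 : fv n j (if (b < n)%N then (p, a, inord b.+1)
       else ext nb n p (lift ord0 (lift ord0 ord0)) (n - a))
   = FF n.+1 j a (b%:Z + 1).
  case: ifP => h.
    rewrite /fv /= inordK; last lia.
    by congr (FF _ _ _ _); lia.
  rewrite fv_ext //; try by lia.
  have -> : b%:Z + 1 = n.+1%:Z by lia.
  rewrite FF_L2 //; congr (FF _ _ _ _); lia.
have T3 : fv n j (if (0 < a)%N then (p, inord a.-1, b)
       else ext nb n p (lift ord0 (lift ord0 (lift ord0 ord0))) (n - b))
   = FF n.+1 j (a%:Z - 1) b.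
  case: ifP => h.
    rewrite /fv /= inordK; last lia.
    by congr (FF _ _ _ _); lia.
  rewrite fv_ext //; try by lia.
  have -> : a%:Z - 1 = -1 by lia.
  rewrite FF_L3 //; congr (FF _ _ _ _); lia.
rewrite T0 T1 T2 T3.
have H := FF_harm n.+1 j a b.
rewrite -H; ring.
Qed.

Lemma nbr_set {V : finType} {adj : rel V} nb n (x : V * 'I_n.+1 * 'I_n.+1) :
  symmetric adj -> is_orientation adj nb ->
  [set y | GC_adj nb n.+1 x y] = [set Nbr nb n x i | i in 'I_4].
Proof.
move=> sym ori; apply/setP => y; rewrite inE.
apply/idP/imsetP.
  by case/(adj_Nbr _ _ _ _ sym ori) => i ->; exists i.
by case=> i _ ->; apply: (Nbr_adj _ _ _ _ sym ori).
Qed.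

Lemma row_eig {V : finType} {adj : rel V} (nb : V -> 'I_4 -> V) n j c :
  symmetric adj -> irreflexive adj -> is_orientation adj nb -> ~~ odd n.+1 ->
  \sum_i fv n j (enum_val i) * laplacian_mx (GC_adj nb n.+1) i c
    = 4%:R * fv n j (enum_val c).
Proof.
move=> sym irr ori hm.
set x := enum_val c.
under eq_bigr do rewrite mxE mulrBr.
rewrite sumrB.
have -> : \sum_i fv n j (enum_val i) * (if i == c then (deg (GC_adj nb n.+1) (enum_val i))%:R else 0)
   = fv n j x * (deg (GC_adj nb n.+1) x)%:R.
  rewrite (bigD1 c) //= eqxx big1 ?addr0 // => i /negbTE ->; by rewrite mulr0.
have hd : deg (GC_adj nb n.+1) x = 4%N.
  rewrite /deg (nbr_set _ _ _ sym ori) card_imset; last exact: (Nbr_inj _ _ _ irr ori).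
  by rewrite card_ord.
rewrite [X in _ - X](_ : _ = 0); last first.
  rewrite (reindex enum_rank) /=; last by apply: onW_bij; apply: enum_rank_bij.
  under eq_bigr do rewrite enum_rankK.
  under eq_bigr do rewrite GC_adj_sym.
  rewrite (bigID (fun y => GC_adj nb n.+1 x y)) /=.
  rewrite [X in _ + X]big1 ?addr0; last by move=> y /negbTE ->; rewrite mulr0.
  under eq_bigr => y hy do rewrite hy mulr1.
  have -> : \sum_(y | GC_adj nb n.+1 x y) fv n j y
     = \sum_(y in [set y | GC_adj nb n.+1 x y]) fv n j y.
    by apply: eq_bigl => y; rewrite inE.
  rewrite (nbr_set _ _ _ sym ori) big_imset /=; last by move=> i i' _ _; apply: (Nbr_inj _ _ _ irr ori).
  exact: Nbr_sum.
by rewrite hd subr0 mulrC.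
Qed.

Lemma dvd_small (m : nat) (z : int) : (`|z| < m)%N -> (m%:Z %| z)%Z = (z == 0).
Proof.
move=> h; rewrite dvdzE /=.
case: (eqVneq z 0) => [->|nz]; first by rewrite dvdn0.
apply/negP => hd; have := dvdn_leq _ hd; lia.
Qed.

Lemma FF_test m r r' : ~~ odd m -> (2 * r + 1 + 2 * r' + 1 < m)%N ->
  FF m (2 * r + 1) (2 * r')%N (0%N) = (r == r')%:R.
Proof.
move=> hm h; rewrite /FF /dd sgn_even // (sgn_even (2 * r')%N); last by rewrite mul2n odd_double.
rewrite !dvd_small; try lia.
case: eqP => h1; case: eqP => h2; case: eqP => h3; case: eqP => h4; case: eqP => h5;
  try lia; rewrite /= ?mulr1n ?mulr0n; ring.
Qed.

Lemma main_n {V : finType} {adj : rel V} (nb : V -> 'I_4 -> V) n k (p0 : V) :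
  symmetric adj -> irreflexive adj -> is_orientation adj nb ->
  n.+1 = (2 * k)%N -> (2 <= k)%N ->
  (uphalf (k - 1) <=
    \rank (eigenspace (laplacian_mx (GC_adj nb n.+1)) (4%:R : algC)))%N.
Proof.
move=> sym irr ori hk k2.
have hm : ~~ odd n.+1 by rewrite hk mul2n odd_double.
set R := uphalf (k - 1).
pose M : 'M[algC]_(R, #|{: V * 'I_n.+1 * 'I_n.+1}|) :=
  \matrix_(r, c) fv n (2 * r + 1)%N (enum_val c).
have HM : M *m laplacian_mx (GC_adj nb n.+1) = 4%:R *: M.
  apply/matrixP => r c; rewrite !mxE.
  under eq_bigr do rewrite mxE.
  exact: row_eig.
pose xr (r : 'I_R) : V * 'I_n.+1 * 'I_n.+1 := (p0, inord (2 * r)%N, inord 0).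
pose P : 'M[algC]_(#|{: V * 'I_n.+1 * 'I_n.+1}|, R) :=
  \matrix_(c, r) (c == enum_rank (xr r))%:R.
have HP : M *m P = 1%:M.
  apply/matrixP => r r'; rewrite !mxE.
  rewrite (bigD1 (enum_rank (xr r'))) //= big1 ?addr0; last first.
    by move=> c /negbTE hc; rewrite !mxE hc mulr0.
  rewrite !mxE eqxx mulr1 enum_rankK /fv /xr /=.
  have Hr := ltn_ord r; have Hr' := ltn_ord r'.
  rewrite !inordK; try lia.
  apply: FF_test => //; lia.
have := mxrankM_maxl M P; rewrite HP mxrank1 => h1.
apply: (leq_trans h1); apply: mxrankS; exact/eigenspaceP.
Qed.
Close Scope ring_scope.

Theorem theorem1p5 (V : finType) (adj : rel V) (nb : V -> 'I_4 -> V) :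
  0 < #|V| ->
  symmetric adj -> irreflexive adj ->
  (forall x y : V, connect adj x y) ->
  (forall p : V, #|[set q | adj p q]| = 4) ->
  is_orientation adj nb ->
  forall k : nat, 2 <= k ->
  uphalf (k - 1) <=
    \rank (eigenspace (laplacian_mx (GC_adj nb (2 * k))) (4%:R : algC)).
Proof.
move=> hV sym irr _ _ ori k hk.
case/card_gt0P: hV => p0 _.
have hn : (2 * k = ((2 * k).-1).+1)%N by lia.
rewrite hn.
apply: (main_n nb ((2 * k).-1) k p0 sym irr ori _ hk).
by rewrite -hn.
Qed.
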